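(* Let $G$ be a split connected reductive group, $M\subseteq G$ a Levi subgroup containing the maximal torus $T$, and $\lambda\in X^*(T)$. For every $w^M\in W^M$, $(w^M)^{-1}\mathrm{Adm}_M(\lambda)\,w^M\subseteq\mathrm{Adm}(\lambda)$.
   Context: $W^M=\{w\in W:\ell(s_\alpha w)>\ell(w)\text{ for all simple roots }\alpha\text{ of }M\}$. For $\lambda\in X^*(T)$, $\mathrm{Adm}(\lambda)=\{\tilde w\in\tilde W:\tilde w\le t_{w(\lambda)}\text{ for some }w\in W\}$, where $\tilde W=X^*(T)\rtimes W$ carries the Bruhat order $\le$ defined via the dominant base alcove (elements in different cosets of the affine Weyl group are incomparable); $\mathrm{Adm}_M(\lambda)\subseteq\tilde W_M=X^*(T)\rtimes W_M$ is defined in the same way for $M$ (with $M$'s dominant base alcove). *)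

(* Defs.v *)
(* Combinatorial model of a split connected reductive group
   through its (reduced) root datum. *)
From HB Require Import structures.
From mathcomp Require Import all_boot all_order all_algebra.
From Stdlib Require Import Relations.
Set Implicit Arguments. Unset Strict Implicit. Unset Printing Implicit Defensive.
Import Order.TTheory GRing.Theory Num.Theory.
Local Open Scope ring_scope.

Section RootData.
Variable n : nat.

(* X^*(T) and X_*(T) are both identified with Z^n (column vectors), with
   the perfect pairing <x, c> = sum_i x_i c_i. *)
Definition lat := 'cV[int]_n.
Definition dot (x c : lat) : int := \sum_(i < n) x i 0 * c i 0.

(* a root together with its coroot *)
Definition rootpair := (lat * lat)%type.

Definition sref (p : rootpair) : 'M[int]_n := 1%:M - p.1 *m p.2^T.
Definition srefv (p : rootpair) (c : lat) : lat := c - dot p.1 c *: p.2.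

(* root datum (Phi, Phi^v) with the bijection alpha |-> alpha^v *)
Definition is_root_datum (R : seq rootpair) : Prop :=
  [/\ uniq (map fst R), uniq (map snd R),
      (forall p, p \in R -> dot p.1 p.2 = 2),
      (forall p q, p \in R -> q \in R -> sref p *m q.1 \in map fst R) &
      (forall p q, p \in R -> q \in R -> srefv p q.2 \in map snd R)].

Definition reduced (R : seq rootpair) : Prop :=
  forall p, p \in R -> (2 : int) *: p.1 \notin map fst R.

(* Borel B ⊇ T  <->  positive system {alpha | <alpha, xi> > 0} for a regular xi *)
Definition regular (R : seq rootpair) (xi : lat) : Prop :=
  forall p, p \in R -> dot p.1 xi != 0.
Definition pos (xi : lat) (a : lat) : bool := 0 < dot a xi.

(* Levi M ⊇ T  <->  M = Z_G(mu) for a cocharacter mu; roots of M *)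
Definition levi_roots (R : seq rootpair) (mu : lat) : seq rootpair :=
  [seq p <- R | dot p.1 mu == 0].

Definition prod_refl (s : seq rootpair) : 'M[int]_n :=
  foldr (fun p m => sref p *m m) 1%:M s.
Definition inW (R : seq rootpair) (w : 'M[int]_n) : Prop :=
  exists s : seq rootpair, {subset s <= R} /\ w = prod_refl s.

(* extended affine Weyl group X^* ⋊ W: (lam, w) stands for t_lam w,
   acting on X^* ⊗ R by x |-> lam + w x *)
Definition tW := (lat * 'M[int]_n)%type.
Definition mulW (x y : tW) : tW := (x.1 + x.2 *m y.1, x.2 *m y.2).
Definition transl (lam : lat) : tW := (lam, 1%:M).

(* length = number of affine root hyperplanes {<x,alpha^v> = k} separating the
   dominant base alcove {0 < <x,alpha^v> < 1, alpha > 0} from its image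
   (Iwahori--Matsumoto formula for this count). *)
Definition len (R : seq rootpair) (xi : lat) (x : tW) : nat :=
  (\sum_(p <- R | pos xi p.1)
     (if pos xi (invmx x.2 *m p.1) then `|dot x.1 p.2|%N
      else `|dot x.1 p.2 - 1|%N))%N.

(* affine reflection in the hyperplane <x, alpha^v> = k *)
Definition aref (p : rootpair) (k : int) : tW := (k *: p.1, sref p).

Definition bstep (R : seq rootpair) (xi : lat) (x y : tW) : Prop :=
  exists (p : rootpair) (k : int),
    [/\ p \in R, y = mulW (aref p k) x & (len R xi x < len R xi y)%N].
Definition bruhat_le (R : seq rootpair) (xi : lat) : relation tW :=
  clos_refl_trans tW (bstep R xi).

Definition Adm (R : seq rootpair) (xi : lat) (lam : lat) (x : tW) : Prop :=
  exists w, inW R w /\ bruhat_le R xi x (transl (w *m lam)).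

Definition lenW (R : seq rootpair) (xi : lat) (w : 'M[int]_n) : nat :=
  len R xi (0, w).
Definition simple_root (R : seq rootpair) (xi : lat) (p : rootpair) : Prop :=
  [/\ p \in R, pos xi p.1 &
      ~ exists q r, [/\ q \in R, r \in R, pos xi q.1, pos xi r.1 & p.1 = q.1 + r.1]].
Definition WM (R : seq rootpair) (xi mu : lat) (w : 'M[int]_n) : Prop :=
  inW R w /\
  forall p, simple_root (levi_roots R mu) xi p ->
    (lenW R xi w < lenW R xi (sref p *m w))%N.

Definition conjW (v : 'M[int]_n) (x : tW) : tW :=
  mulW (mulW (0, invmx v) x) (0, v).
End RootData.

(* Main.v *)
Require Import Defs.
From HB Require Import structures.
From mathcomp Require Import all_boot all_order all_algebra.
From mathcomp Require Import zify ring lra.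
From Stdlib Require Import Relations Classical.
Set Implicit Arguments. Unset Strict Implicit. Unset Printing Implicit Defensive.
Import Order.TTheory GRing.Theory Num.Theory.
Local Open Scope ring_scope.

Section Basics.
Variable n : nat.
Implicit Types (x y c : lat n) (p q : rootpair n) (A B : 'M[int]_n).

Lemma dotE x c : dot x c = (x^T *m c) 0 0.
Proof. by rewrite /dot !mxE; apply: eq_bigr => i _; rewrite mxE. Qed.

Lemma dotC x c : dot x c = dot c x.
Proof. by rewrite /dot; apply: eq_bigr => i _; rewrite mulrC. Qed.

Lemma dotDl x y c : dot (x + y) c = dot x c + dot y c.
Proof. by rewrite /dot -big_split; apply: eq_bigr => i _; rewrite mxE mulrDl. Qed.

Lemma dotZl a x c : dot (a *: x) c = a * dot x c.
Proof. by rewrite /dot mulr_sumr; apply: eq_bigr => i _; rewrite mxE mulrA. Qed.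

Lemma dotNl x c : dot (- x) c = - dot x c.
Proof. by rewrite -scaleN1r dotZl mulN1r. Qed.

Lemma dotBl x y c : dot (x - y) c = dot x c - dot y c.
Proof. by rewrite dotDl dotNl. Qed.

Lemma dot0l c : dot 0 c = 0.
Proof. by rewrite -(scale0r (0 : lat n)) dotZl mul0r. Qed.

Lemma dotDr x c y : dot x (c + y) = dot x c + dot x y.
Proof. by rewrite dotC dotDl dotC [dot y x]dotC. Qed.
Lemma dotZr a x c : dot x (a *: c) = a * dot x c.
Proof. by rewrite dotC dotZl dotC. Qed.
Lemma dotNr x c : dot x (- c) = - dot x c.
Proof. by rewrite dotC dotNl dotC. Qed.
Lemma dotBr x c y : dot x (c - y) = dot x c - dot x y.
Proof. by rewrite dotDr dotNr. Qed.
Lemma dot0r x : dot x 0 = 0.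
Proof. by rewrite dotC dot0l. Qed.

Lemma dot_mull A x c : dot (A *m x) c = dot x (A^T *m c).
Proof. by rewrite !dotE trmx_mul mulmxA. Qed.

Lemma dot_sum (I : Type) (r : seq I) (P : pred I) (F : I -> lat n) c :
  dot (\sum_(i <- r | P i) F i) c = \sum_(i <- r | P i) dot (F i) c.
Proof.
elim/big_rec2: _ => [|i y1 y2 _ <-]; first by rewrite dot0l.
by rewrite dotDl.
Qed.

Lemma mul_col11 (u : lat n) (M : 'M[int]_1) : u *m M = M 0 0 *: u.
Proof. by rewrite {1}[M]mx11_scalar mul_mx_scalar. Qed.

Lemma sref_mul p x : sref p *m x = x - dot x p.2 *: p.1.
Proof.
rewrite /sref mulmxBl mul1mx -mulmxA mul_col11; congr (_ - _ *: _).
by rewrite dotC dotE.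
Qed.

Lemma sref_tr p c : (sref p)^T *m c = srefv p c.
Proof.
rewrite /sref /srefv linearB /= trmx1 trmx_mul trmxK mulmxBl mul1mx -mulmxA mul_col11.
by rewrite dotE.
Qed.

Lemma trT11 x c : c^T *m x = (dot x c)%:M.
Proof. by rewrite {1}[c^T *m x]mx11_scalar dotC dotE. Qed.

Lemma sref_invol p : dot p.1 p.2 = 2 -> sref p *m sref p = 1%:M.
Proof.
move=> h; rewrite /sref mulmxBl mul1mx mulmxBr mulmx1 -!mulmxA.
rewrite [p.2^T *m (p.1 *m _)]mulmxA trT11 h mul_scalar_mx -scalemxAr.
rewrite opprB addrA; apply/matrixP => i j; rewrite !mxE; ring.
Qed.
End Basics.

Section Compat.
Variable n : nat.
Implicit Types (x y c : lat n) (p q : rootpair n) (A B : 'M[int]_n).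

Definition sig p q : rootpair n := (sref p *m q.1, srefv p q.2).

Lemma srefv_invol p c : dot p.1 p.2 = 2 -> srefv p (srefv p c) = c.
Proof.
move=> h; rewrite -!sref_tr mulmxA -trmx_mul sref_invol // trmx1 mul1mx //.
Qed.

Lemma dot_sig p x c : dot p.1 p.2 = 2 ->
  dot (sref p *m x) (srefv p c) = dot x c.
Proof. by move=> h; rewrite dot_mull sref_tr srefv_invol. Qed.

Lemma sig_invol p q : dot p.1 p.2 = 2 -> sig p (sig p q) = q.
Proof.
move=> h; rewrite /sig /= srefv_invol // mulmxA sref_invol // mul1mx.
by case: q.
Qed.

Lemma srefvE p c : srefv p c = c - dot p.1 c *: p.2.
Proof. by []. Qed.

Lemma bound_le (L : seq (lat n)) e v : v \in L ->
  `|dot v e| <= \sum_(u <- L) `|dot u e|.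
Proof.
elim: L => [|u L IH] //=; rewrite inE big_cons => /orP [/eqP -> | /IH h].
  by rewrite lerDl sumr_ge0.
by apply: le_trans h _; rewrite lerDr.
Qed.

Lemma no_inf (L : seq (lat n)) e (f : nat -> lat n) a t :
  t != 0 -> (forall m, f m \in L) -> (forall m, dot (f m) e = a + m%:Z * t) -> False.
Proof.
move=> t0 fL fE.
set B := \sum_(u <- L) `|dot u e|.
have hB : 0 <= B by rewrite sumr_ge0.
pose m := (absz a + absz B + 1)%N.
have := bound_le e (fL m); rewrite fE -/B.
have hM : (m%:Z) = `|a| + B + 1.
  by rewrite /m !PoszD !abszE (ger0_norm hB).
rewrite hM; move: t0 hB; clear; nia.
Qed.
End Compat.

Section Compat2.
Variable n : nat.
Implicit Types (x y c : lat n) (p q : rootpair n) (A B : 'M[int]_n).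

Lemma sref_lin p x y a : sref p *m (x - a *: y) = sref p *m x - a *: (sref p *m y).
Proof. by rewrite mulmxBr scalemxAr. Qed.

Lemma conj_sref p q v : dot p.1 p.2 = 2 ->
  sref p *m (sref q *m (sref p *m v)) = v - dot v (srefv p q.2) *: (sref p *m q.1).
Proof.
move=> h; rewrite [sref q *m _]sref_mul sref_lin mulmxA sref_invol // mul1mx.
by rewrite dot_mull sref_tr.
Qed.

Lemma dot_delta x (i : 'I_n) : dot x (delta_mx i 0) = x i 0.
Proof.
rewrite /dot (bigD1 i) //= big1 => [|j /negbTE ji]; rewrite mxE ?eqxx ?ji ?mulr0 //.
by rewrite mulr1 addr0.
Qed.

Lemma compat (R : seq (rootpair n)) : is_root_datum R ->
  forall p q, p \in R -> q \in R -> sig p q \in R.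
Proof.
case=> u1 u2 h2 hc hcv p q pR qR.
set al := sref p *m q.1; set c := srefv p q.2.
have /mapP [r rR ral] : al \in map fst R by apply: hc.
have /mapP [r2 r2R r2c] : c \in map snd R by apply: hcv.
have hp := h2 _ pR; have hr := h2 _ rR; have hr2 := h2 _ r2R.
have alc : dot al c = 2 by rewrite dot_sig // h2.
set d := c - r.2.
have dal : dot al d = 0 by rewrite dotBr alc ral hr subrr.
have dphi : forall g, g \in map fst R -> dot g d = 0.
  move=> g gR; apply/eqP/negPn/negP => hgd.
  pose u (v : lat n) := sref p *m (sref q *m (sref p *m (sref r *m v))).
  have uE v : u v = v - dot v d *: al.
    rewrite /u conj_sref // -/c -/al sref_mul -ral dotBl dotZl alc.
    rewrite /d dotBr; apply/matrixP => i j; rewrite !mxE; ring.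
  have uR v : v \in map fst R -> u v \in map fst R.
    move=> vR; rewrite /u.
    have cl : forall s w, s \in R -> w \in map fst R -> sref s *m w \in map fst R.
      by move=> s w sR /mapP [t tR ->]; apply: hc.
    by apply: (cl) => //; apply: (cl) => //; apply: (cl) => //; apply: (cl).
  pose f m := iter m u g.
  have fE m : f m = g - (m%:Z * dot g d) *: al.
    elim: m => [|m IH]; first by rewrite /f /= mul0r scale0r subr0.
    rewrite /f iterS -/(f m) uE IH dotBl dotZl dal mulr0 subr0 -addrA -opprD -scalerDl.
    by congr (_ - _ *: _); rewrite -addn1 PoszD; ring.
  apply: (@no_inf n (map fst R) r.2 f (dot g r.2) (- (2 * dot g d))).
  - by rewrite oppr_eq0 mulf_neq0.
  - by elim=> [|m IH] //; rewrite /f iterS; apply: uR.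
  - by move=> m; rewrite fE dotBl dotZl ral hr; ring.
have d0 : d = 0.
  apply/matrixP => i j; rewrite (ord1 j) mxE; apply/eqP/negPn/negP => hd.
  pose v (y : lat n) := srefv r2 (srefv r y).
  have vR y : y \in map snd R -> v y \in map snd R.
    move=> /mapP [t tR ->]; rewrite /v.
    have /mapP [t2 t2R ->] : srefv r t.2 \in map snd R by apply: hcv.
    by apply: hcv.
  pose g m := iter m v c.
  have gE m : g m = c + (2 * m%:Z) *: d.
    elim: m => [|m IH]; first by rewrite /g /= mulr0 scale0r addr0.
    rewrite /g iterS -/(g m) IH /v !srefvE dotDr dotZr -ral dal mulr0 addr0 alc.
    have hdr2 : dot r2.1 d = 0 by apply: dphi; apply: map_f.
    have hr2c : dot r2.1 c = 2 by rewrite r2c.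
    rewrite dotBr dotDr dotZr hdr2 mulr0 addr0 dotZr hr2c -r2c.
    have : dot r2.1 r.2 = 2.
      by have := hdr2; rewrite /d dotBr hr2c => /eqP; rewrite subr_eq0 => /eqP <-.
    have -> : (m.+1)%:Z = m%:Z + 1 by rewrite -addn1 PoszD.
    move=> ->; rewrite /d; apply/matrixP => a b; rewrite !mxE; ring.
  apply: (@no_inf n (map snd R) (delta_mx i 0) g (dot c (delta_mx i 0)) (2 * d i 0)).
  - by rewrite mulf_neq0 //; move: hd; rewrite /d !mxE.
  - by elim=> [|m IH]; [rewrite /g /= r2c map_f | rewrite /g iterS; apply: vR].
  - by move=> m; rewrite gE dotDl dotZl !dot_delta; ring.
have -> : sig p q = r.
  rewrite /sig -/al -/c ral; move/eqP: d0; rewrite /d subr_eq0 => /eqP ->.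
  by case: r {rR ral hr d dal dphi}.
done.
Qed.
End Compat2.

Section System.
Variable n : nat.
Implicit Types (x y c : lat n) (p q : rootpair n) (A B : 'M[int]_n).

Definition good (S : seq (rootpair n)) (xi : lat n) : Prop :=
  [/\ uniq S, (forall p, p \in S -> dot p.1 p.2 = 2),
      (forall p q, p \in S -> q \in S -> sig p q \in S) &
      (forall p, p \in S -> dot p.1 xi != 0)].

Lemma good_R R xi : is_root_datum R -> regular R xi -> good R xi.
Proof.
move=> hR hreg; have [u1 _ h2 _ _] := hR; split => //.
- exact: map_uniq u1.
- exact: compat.
Qed.

Variables (S : seq (rootpair n)) (xi : lat n).
Hypothesis hS : good S xi.

Lemma gS2 p : p \in S -> dot p.1 p.2 = 2. Proof. by case: hS => _ h _ _; apply: h. Qed.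
Lemma gSsig p q : p \in S -> q \in S -> sig p q \in S. Proof. by case: hS => _ _ h _; apply: h. Qed.
Lemma gSreg p : p \in S -> dot p.1 xi != 0. Proof. by case: hS => _ _ _ h; apply: h. Qed.
Lemma gSuniq : uniq S. Proof. by case: hS. Qed.

Lemma invol_perm (f : rootpair n -> rootpair n) :
  (forall q, q \in S -> f q \in S) -> (forall q, f (f q) = q) ->
  perm_eq S (map f S).
Proof.
move=> fS ff; have finj : injective f by apply: (can_inj ff).
have u := gSuniq.
have [_ e] : (size (map f S) = size S) * (map f S =i S).
  apply: uniq_min_size.
  - by rewrite map_inj_uniq.
  - by move=> z /mapP [q qS ->]; apply: fS.
  - by rewrite size_map.
by apply: uniq_perm => //; rewrite ?map_inj_uniq // => z; rewrite e.
Qed.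

Lemma reindex (f : rootpair n -> rootpair n) (P : pred (rootpair n)) (F : rootpair n -> int) :
  (forall q, q \in S -> f q \in S) -> (forall q, f (f q) = q) ->
  \sum_(q <- S | P q) F q = \sum_(q <- S | P (f q)) F (f q).
Proof.
by move=> fS ff; rewrite (perm_big _ (invol_perm fS ff)) big_map.
Qed.

Lemma sigE p q : sig p q = (q.1 - dot q.1 p.2 *: p.1, q.2 - dot p.1 q.2 *: p.2).
Proof. by rewrite /sig sref_mul. Qed.

Definition nu q : rootpair n := (- q.1, - q.2).

Lemma nu_sig q : q \in S -> nu q = sig q q.
Proof.
move=> qS; rewrite sigE gS2 //; congr (_, _); apply/matrixP => i j; rewrite !mxE; ring.
Qed.
Lemma nuS q : q \in S -> nu q \in S.
Proof. by move=> qS; rewrite nu_sig //; apply: gSsig. Qed.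
Lemma nuK q : nu (nu q) = q.
Proof. by rewrite /nu !opprK; case: q. Qed.

Lemma sig_inv p q : p \in S -> sig p (sig p q) = q.
Proof. by move=> pS; apply: sig_invol; apply: gS2. Qed.

Definition pos' (v : lat n) : bool := pos xi v.

Definition zeta : lat n := \sum_(q <- S | pos xi q.1) q.1.

Lemma zeta_pos p : p \in S -> pos xi p.1 -> 0 < dot zeta p.2.
Proof.
move=> pS pp.
pose g q := dot q.1 p.2.
have e1 : dot zeta p.2 = \sum_(q <- S) (if pos xi q.1 then g q else 0).
  by rewrite /zeta dot_sum big_mkcond.
have e2 : dot zeta p.2 = \sum_(q <- S) (if pos xi (sig p q).1 then - g q else 0).
  rewrite e1 (@reindex (sig p) xpredT) //; last by move=> q; apply: sig_inv.
  - apply: eq_bigr => q _; rewrite /g sigE /= dotBl dotZl gS2 //.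
    by case: ifP => // _; ring.
  - by move=> q; apply: gSsig.
have : dot zeta p.2 + dot zeta p.2 =
  \sum_(q <- S) ((if pos xi q.1 then g q else 0) - (if pos xi (sig p q).1 then g q else 0)).
  by rewrite {1}e1 e2 -big_split; apply: eq_bigr => q _; case: ifP; case: ifP => //= *; ring.
rewrite (bigD1_seq p) //= ?gSuniq //.
have Tge q : 0 <= (if pos xi q.1 then g q else 0) - (if pos xi (sig p q).1 then g q else 0).
  rewrite /pos sigE /= dotBl dotZl /g.
  move: pp; rewrite /pos => pp.
  case: ifP => h1; case: ifP => h2; rewrite ?subrr //.
  + move/negbT: h2; rewrite -leNgt => h2; nia.
  + move/negbT: h1; rewrite -leNgt => h1; nia.
have Tp : (if pos xi p.1 then g p else 0) - (if pos xi (sig p p).1 then g p else 0) = 2.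
  rewrite pp /g gS2 // sigE /= gS2 // /pos.
  have -> : p.1 - 2 *: p.1 = - p.1 by apply/matrixP => i j; rewrite !mxE; ring.
  rewrite dotNl; move: pp; rewrite /pos => pp; rewrite ltrNr oppr0 ltNge (ltW pp) /=; ring.
rewrite Tp; set T := \sum_(i <- S | i != p) _ => h.
have : 0 <= T by apply: sumr_ge0 => q _; apply: Tge.
lia.
Qed.

Lemma pos_neg v : dot v xi != 0 -> pos xi (- v) = ~~ pos xi v.
Proof. by rewrite /pos dotNl oppr_gt0 => h; rewrite -leNgt le_eqVlt (negbTE h). Qed.

Lemma zeta_neg p : p \in S -> ~~ pos xi p.1 -> dot zeta p.2 < 0.
Proof.
move=> pS np; have := zeta_pos (nuS pS); rewrite /nu /= pos_neg ?gSreg // np dotNr.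
by rewrite oppr_gt0; apply.
Qed.
End System.

Section WeylS.
Variable n : nat.
Implicit Types (x y c : lat n) (p q : rootpair n) (A B : 'M[int]_n).
Variables (S : seq (rootpair n)) (xi : lat n).
Hypothesis hS : good S xi.

Lemma prod_refl_cat s1 s2 : prod_refl (s1 ++ s2) = prod_refl s1 *m prod_refl s2 :> 'M[int]_n.
Proof. by elim: s1 => [|a s1 IH] /=; rewrite ?mul1mx // IH mulmxA. Qed.

Lemma invmx_eq A B : A *m B = 1%:M -> invmx A = B.
Proof.
move=> h; have [uA _] := mulmx1_unit h.
by rewrite -[B]mul1mx -(mulVmx uA) -mulmxA h mulmx1.
Qed.

Lemma prod_rev s : {subset s <= S} -> prod_refl s *m prod_refl (rev s) = 1%:M :> 'M[int]_n.
Proof.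
elim: s => [|a s IH] sS /=; first by rewrite mul1mx.
rewrite rev_cons -cats1 prod_refl_cat /= mulmx1 mulmxA -[_ *m prod_refl (rev s)]mulmxA.
rewrite IH ?mulmx1 ?sref_invol //; first by apply: (gS2 hS); apply: sS; rewrite inE eqxx.
by move=> z zs; apply: sS; rewrite inE zs orbT.
Qed.

Lemma invW s : {subset s <= S} -> invmx (prod_refl s) = prod_refl (rev s).
Proof. by move=> sS; apply: invmx_eq; apply: prod_rev. Qed.

Lemma unitW s : {subset s <= S} -> prod_refl s \in unitmx.
Proof. by move=> sS; have [] := mulmx1_unit (prod_rev sS). Qed.

Lemma actW s q : {subset s <= S} -> q \in S ->
  (invmx (prod_refl s) *m q.1, (prod_refl s)^T *m q.2) \in S.
Proof.
move=> sS; rewrite invW //; elim: s sS q => [|a s IH] sS q qS /=.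
  by rewrite trmx1 !mul1mx; case: q qS.
rewrite rev_cons -cats1 prod_refl_cat /= mulmx1 trmx_mul -!mulmxA sref_tr.
have aS : a \in S by apply: sS; rewrite inE eqxx.
have := IH _ (sig a q) (gSsig hS aS qS); rewrite /sig /=; apply.
by move=> z zs; apply: sS; rewrite inE zs orbT.
Qed.

Definition ef (v : lat n) : int := if pos xi v then 0 else -1.
Definition fv (x : tW n) q : int := dot x.1 q.2 + ef (invmx x.2 *m q.1).

Lemma ef_neg v : dot v xi != 0 -> ef (- v) = -1 - ef v.
Proof. by move=> h; rewrite /ef pos_neg //; case: (pos xi v) => /=; rewrite ?subrr ?subr0. Qed.

Lemma len_abs (x : tW n) : (len S xi x)%:Z = \sum_(q <- S | pos xi q.1) `|fv x q|.
Proof.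
rewrite /len (big_morph Posz PoszD (erefl 0%:Z)); apply: eq_bigr => q _.
by rewrite /fv /ef; case: ifP => _; rewrite abszE ?addr0.
Qed.

Lemma len2 (x : tW n) : inW S x.2 ->
  (2 * len S xi x)%:Z = \sum_(q <- S) `|fv x q - ef q.1|.
Proof.
case=> s [sS xs].
have fnu q : q \in S -> fv x (nu q) = -1 - fv x q.
  move=> qS; rewrite /fv /nu /= dotNr mulmxN ef_neg; first by ring.
  by have := gSreg hS (actW sS qS); rewrite xs.
rewrite PoszM len_abs [RHS](bigID (fun q => pos xi q.1)) /=.
rewrite [X in _ = _ + X](@reindex _ S xi hS (@nu n) (fun q => ~~ pos xi q.1)) //=; last 2 first.
- by move=> q; apply: (nuS hS).
- by move=> q; apply: nuK.
have e1 : \sum_(q <- S | pos xi q.1) `|fv x q - ef q.1| = \sum_(q <- S | pos xi q.1) `|fv x q|.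
  by apply: eq_bigr => q qp; rewrite /ef qp subr0.
have e2 : \sum_(q <- S | ~~ pos xi (- q.1)) `|fv x (nu q) - ef (- q.1)| =
          \sum_(q <- S | pos xi q.1) `|fv x q|.
  rewrite big_seq_cond [RHS]big_seq_cond; apply: eq_big => q.
    by case: (boolP (q \in S)) => //= qS; rewrite pos_neg ?negbK // (gSreg hS).
  move=> /andP [qS qp]; have qp' : pos xi q.1 by move: qp; rewrite pos_neg ?negbK // (gSreg hS).
  rewrite fnu // /ef pos_neg ?(gSreg hS) // qp' /=.
  by rewrite -normrN; congr `|_|; ring.
by rewrite e1 e2; ring.
Qed.
End WeylS.

Definition sep (a b j : int) : bool := ((a < j) && (j <= b)) || ((b < j) && (j <= a)).
Definition ov (a b c : int) : int :=
  if (a < b) && (a < c) then (if b - a <= c - a then b - a else c - a)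
  else if (b < a) && (c < a) then (if a - b <= a - c then a - b else a - c) else 0.

Lemma ov_id a b c : `|c - b| = `|c - a| + `|b - a| - 2 * ov a b c.
Proof. rewrite /ov; case: ifP => h1; [case: ifP => h2| case: ifP => h2; [case: ifP => h3|]]; lia. Qed.


Lemma perq a a' c c' kg :
  (forall j, sep a (a' + kg) j -> sep a c j -> sep a' c' (j - kg) -> False) ->
  ov a (a' + kg) c + ov a' (a - kg) c' <= `|a' + kg - a|.
Proof.
move=> H.
case: (ltrgtP a (a' + kg)) => hab.
- have := H (a + ov a (a' + kg) c); rewrite /sep /ov.
  repeat case: ifP; lia.
- have := H (a - ov a (a' + kg) c + 1); rewrite /sep /ov.
  repeat case: ifP; lia.
- rewrite /ov; repeat case: ifP; lia.
Qed.

Lemma perq_strict a a' c c' kg j0 :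
  (forall j, sep a (a' + kg) j -> sep a c j -> sep a' c' (j - kg) -> False) ->
  sep a (a' + kg) j0 -> ~~ sep a c j0 -> ~~ sep a' c' (j0 - kg) ->
  ov a (a' + kg) c + ov a' (a - kg) c' < `|a' + kg - a|.
Proof.
move=> H; rewrite /sep => h1 h2 h3.
case: (ltrgtP a (a' + kg)) => hab.
- move: h1 h2 h3; rewrite /ov. repeat case: ifP; lia.
- move: h1 h2 h3; rewrite /ov. repeat case: ifP; lia.
- move: h1 h2 h3; rewrite /ov. repeat case: ifP; lia.
Qed.

Definition Fl (N u a : int) : bool := (N * a < u) && (u < N * (a + 1)).

Lemma flt N u a j : 0 < N -> Fl N u a -> (a < j) = (u < N * j).
Proof.
move=> N0 /andP [h1 h2]; apply/idP/idP => h.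
- have : N * (a + 1) <= N * j by rewrite ler_pM2l //; lia.
  lia.
- have : N * a < N * j by lia.
  by rewrite ltr_pM2l.
Qed.

Lemma sepP N u v a b j : 0 < N -> Fl N u a -> Fl N v b ->
  sep a b j = ((u - N * j) * (v - N * j) < 0).
Proof.
move=> N0 hu hv.
have e1 := flt j N0 hu; have e2 := flt j N0 hv.
have n1 : u != N * j.
  apply/negP => /eqP E; move: hu; rewrite /Fl E => /andP [h1 h2].
  have : a < j by rewrite ltr_pM2l // in h1.
  have : j < a + 1 by rewrite ltr_pM2l // in h2.
  lia.
have n2 : v != N * j.
  apply/negP => /eqP E; move: hv; rewrite /Fl E => /andP [h1 h2].
  have : b < j by rewrite ltr_pM2l // in h1.
  have : j < b + 1 by rewrite ltr_pM2l // in h2.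
  lia.
rewrite /sep; apply/idP/idP.
- move/orP => [/andP [x1 x2] | /andP [x1 x2]].
  + move: x2; rewrite leNgt e2 => x2; rewrite e1 in x1; nia.
  + move: x2; rewrite leNgt e1 => x2; rewrite e2 in x1; nia.
- move=> h; rewrite !leNgt e1 e2.
  case: (ltgtP u (N*j)) => h1; case: (ltgtP v (N*j)) => h2; nia.
Qed.

Lemma no_triple N z zb y yb g k a a' c c' :
  0 < N -> Fl N z a -> Fl N (z - g * zb) a' -> Fl N y c -> Fl N (y - g * yb) c' ->
  0 < (zb - N * k) * (yb - N * k) ->
  forall j, sep a (a' + k * g) j -> sep a c j -> sep a' c' (j - k * g) -> False.
Proof.
move=> N0 hz hz' hy hy' side j.
have hB : Fl N (z - g * zb + N * (k * g)) (a' + k * g).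
  by move: hz'; rewrite /Fl => /andP [h1 h2]; apply/andP; split; nia.
rewrite (sepP _ N0 hz hB) (sepP _ N0 hz hy) (sepP _ N0 hz' hy').
set D := z - N * j; set E := zb - N * k; set F := y - N * j; set G := yb - N * k.
have -> : z - g * zb + N * (k * g) - N * j = D - g * E by rewrite /D /E; ring.
have -> : z - g * zb - N * (j - k * g) = D - g * E by rewrite /D /E; ring.
have -> : y - g * yb - N * (j - k * g) = F - g * G by rewrite /F /G; ring.
move: side; rewrite -/E -/G => side h1 h2 h3.
case: (ltgtP D 0) => hD.
- have a1 : 0 < D - g * E by nia.
  have a2 : 0 < F by nia.
  have a3 : F - g * G < 0 by nia.
  nia.
- have a1 : D - g * E < 0 by nia.
  have a2 : F < 0 by nia.
  have a3 : 0 < F - g * G by nia.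
  nia.
- by move: h1; rewrite hD mul0r ltxx.
Qed.


Lemma side_lemma N zb yb k a c : 0 < N -> Fl N zb a -> Fl N yb c ->
  (k <= c) = (k <= a) -> 0 < (zb - N * k) * (yb - N * k).
Proof.
move=> N0 ha hc e.
have e1 := flt k N0 ha; have e2 := flt k N0 hc.
have n1 : zb != N * k.
  apply/negP => /eqP E; move: ha; rewrite /Fl E => /andP [h1 h2].
  have : a < k by rewrite ltr_pM2l // in h1.
  have : k < a + 1 by rewrite ltr_pM2l // in h2.
  lia.
have n2 : yb != N * k.
  apply/negP => /eqP E; move: hc; rewrite /Fl E => /andP [h1 h2].
  have : c < k by rewrite ltr_pM2l // in h1.
  have : k < c + 1 by rewrite ltr_pM2l // in h2.
  lia.
move: e; rewrite !leNgt e1 e2 => e.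
case: (ltgtP zb (N*k)) => h1; case: (ltgtP yb (N*k)) => h2; move: e; rewrite ?h1 ?h2; try nia;
  try (by move/eqP: n1; rewrite h1); try (by move/eqP: n2; rewrite h2).
Qed.

Lemma at_k N zb yb k a a' c c' : 0 < N -> Fl N zb a -> Fl N (zb - 2 * zb) a' ->
  Fl N yb c -> Fl N (yb - 2 * yb) c' -> 0 < (zb - N * k) * (yb - N * k) ->
  [/\ sep a (a' + k * 2) k, ~~ sep a c k & ~~ sep a' c' (k - k * 2)].
Proof.
move=> N0 hz hz' hy hy' side.
have hB : Fl N (zb - 2 * zb + N * (k * 2)) (a' + k * 2).
  by move: hz'; rewrite /Fl => /andP [h1 h2]; apply/andP; split; nia.
rewrite (sepP _ N0 hz hB) (sepP _ N0 hz hy) (sepP _ N0 hz' hy').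
split.
- have -> : zb - 2 * zb + N * (k * 2) - N * k = - (zb - N * k) by ring.
  case: (ltgtP (zb - N * k) 0) => h; nia.
- by rewrite -leNgt ltW.
- have -> : (zb - 2 * zb - N * (k - k * 2)) * (yb - 2 * yb - N * (k - k * 2)) =
            (zb - N * k) * (yb - N * k) by ring.
  by rewrite -leNgt ltW.
Qed.

Lemma le_sum_mem (T : eqType) (L : seq T) (F : T -> int) q :
  q \in L -> (forall x, 0 <= F x) -> F q <= \sum_(x <- L) F x.
Proof.
move=> qL F0; elim: L qL => [|u L IH] //=; rewrite inE big_cons => /orP [/eqP -> | /IH h].
  by rewrite lerDl sumr_ge0.
by apply: le_trans h _; rewrite lerDr.
Qed.

Section Crit.
Variable n : nat.
Variables (S : seq (rootpair n)) (xi : lat n).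
Hypothesis hS : good S xi.

Definition NN : int := 1 + \sum_(q <- S) `|dot (zeta S xi) q.2|.
Definition Ypt (x : tW n) : lat n := NN *: x.1 + x.2 *m zeta S xi.

Lemma NN_gt q : q \in S -> `|dot (zeta S xi) q.2| < NN.
Proof.
move=> qS; have h : `|dot (zeta S xi) q.2| <= \sum_(q0 <- S) `|dot (zeta S xi) q0.2|.
  by apply: (@le_sum_mem _ S (fun q => `|dot (zeta S xi) q.2|)) => // z; apply: normr_ge0.
rewrite /NN; lia.
Qed.

Lemma NN_pos : 0 < NN.
Proof. by rewrite /NN ltr_wpDr // sumr_ge0. Qed.

Lemma fl_point (x : tW n) q : inW S x.2 -> q \in S -> Fl NN (dot (Ypt x) q.2) (fv xi x q).
Proof.
case=> s [sS xs] qS; have q'S := actW hS sS qS.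
rewrite /Ypt dotDl dotZl dot_mull /fv /ef xs.
have hb := NN_gt q'S.
have hz1 := @zeta_pos _ _ _ hS _ q'S; have hz2 := @zeta_neg _ _ _ hS _ q'S.
move: hb hz1 hz2 => /=.
set u := dot (zeta S xi) _; set d := dot x.1 q.2 => hb hz1 hz2.
rewrite /Fl; case: ifP => hp.
- have t0 := hz1 hp.
  rewrite addr0 mulrDr mulr1; apply/andP; split; lia.
- have t0 := hz2 (negbT hp).
  rewrite !mulrDr mulrN1 mulr1; apply/andP; split; lia.
Qed.

Lemma inW1 : inW S 1%:M.
Proof. by exists [::]. Qed.

Lemma Ypt1 : Ypt (0, 1%:M) = zeta S xi.
Proof. by rewrite /Ypt /= scaler0 add0r mul1mx. Qed.

Lemma crit (x : tW n) p k : inW S x.2 -> p \in S ->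
  (k <= fv xi x p) = (k <= fv xi (0, 1%:M) p) ->
  (len S xi x < len S xi (mulW (aref p k) x))%N.
Proof.
move=> xW pS hside.
have N0 := NN_pos.
set rx := mulW (aref p k) x.
have rxW : inW S rx.2.
  case: xW => s [sS xs]; exists (p :: s); split; last by rewrite /rx /= xs.
  by move=> z; rewrite inE => /orP [/eqP -> | /sS].
pose A (q : rootpair n) := fv xi (0, 1%:M) q.
have AE q : A q = ef xi q.1 by rewrite /A /fv /= dot0l invmx1 mul1mx add0r.
pose g (q : rootpair n) := dot p.1 q.2.
have gsig q : g (sig p q) = - g q.
  by rewrite /g sigE /= dotBr dotZr (gS2 hS pS); ring.
have frx q : fv xi rx q = k * g q + fv xi x (sig p q).
  rewrite /fv /rx /mulW /aref /= dotDl dotZl dot_mull sref_tr.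
  case: xW => s [sS xs]; rewrite xs.
  have sS' : {subset (p :: s) <= S} by move=> z; rewrite inE => /orP [/eqP -> | /sS].
  have -> : invmx (sref p *m prod_refl s) = invmx (prod_refl s) *m sref p.
    have -> : sref p *m prod_refl s = prod_refl (p :: s) by [].
    rewrite !(invW hS) // rev_cons -cats1 prod_refl_cat /= mulmx1 //.
  by rewrite -mulmxA /g; ring.
have h2x := len2 hS xW; have h2r := len2 hS rxW.
pose a (q : rootpair n) := A q; pose b (q : rootpair n) := A (sig p q) + k * g q; pose c (q : rootpair n) := fv xi x q.
have key : \sum_(q <- S) `|fv xi rx q - ef xi q.1| = \sum_(q <- S) `|c q - b q|.
  under eq_bigr => q _ do rewrite frx -AE.
  rewrite (@reindex _ _ _ hS (sig p) xpredT); first last.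
  - by move=> q; apply: (sig_inv hS).
  - by move=> q; apply: (gSsig hS).
  apply: eq_bigr => q _; rewrite gsig (sig_inv hS) // /c /b.
  suff -> : k * - g q + fv xi x q - A (sig p q) = fv xi x q - (A (sig p q) + k * g q) by [].
  ring.
have split_id : \sum_(q <- S) `|c q - b q| = \sum_(q <- S) `|c q - a q| +
    \sum_(q <- S) (`|b q - a q| - 2 * ov (a q) (b q) (c q)).
  by rewrite -big_split /=; apply: eq_bigr => q _; rewrite (ov_id (a q) (b q) (c q)); ring.
have ovsum : \sum_(q <- S) ov (a q) (b q) (c q) =
             \sum_(q <- S) ov (a (sig p q)) (b (sig p q)) (c (sig p q)).
  rewrite (@reindex _ _ _ hS (sig p) xpredT) //.
  - by move=> q; apply: (gSsig hS).
  - by move=> q; apply: (sig_inv hS).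
have bsig q : b (sig p q) = a q - k * g q.
  by rewrite /b /a (sig_inv hS) // gsig; ring.
have hzeta q : q \in S -> Fl NN (dot (zeta S xi) q.2) (A q).
  by move=> qS; rewrite -Ypt1; apply: fl_point => //; apply: inW1.
have hsigz q : dot (zeta S xi) (sig p q).2 = dot (zeta S xi) q.2 - g q * dot (zeta S xi) p.2.
  by rewrite sigE /= dotBr dotZr.
have hsigy q : dot (Ypt x) (sig p q).2 = dot (Ypt x) q.2 - g q * dot (Ypt x) p.2.
  by rewrite sigE /= dotBr dotZr.
have side : 0 < (dot (zeta S xi) p.2 - NN * k) * (dot (Ypt x) p.2 - NN * k).
  apply: (side_lemma N0 (hzeta p pS) (fl_point xW pS)).
  by rewrite hside.
have notrip q : q \in S -> forall j, sep (a q) (a (sig p q) + k * g q) j ->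
    sep (a q) (c q) j -> sep (a (sig p q)) (c (sig p q)) (j - k * g q) -> False.
  move=> qS; apply: (@no_triple NN (dot (zeta S xi) q.2) (dot (zeta S xi) p.2)
     (dot (Ypt x) q.2) (dot (Ypt x) p.2) (g q) k) => //.
  - exact: hzeta.
  - by rewrite -hsigz; apply: hzeta; apply: (gSsig hS).
  - exact: fl_point.
  - by rewrite -hsigy; apply: fl_point => //; apply: (gSsig hS).
have perq_q q : q \in S -> ov (a q) (b q) (c q) + ov (a (sig p q)) (b (sig p q)) (c (sig p q))
    <= `|b q - a q|.
  move=> qS; rewrite bsig /b; apply: perq; exact: notrip.
have perq_p : ov (a p) (b p) (c p) + ov (a (sig p p)) (b (sig p p)) (c (sig p p))
    < `|b p - a p|.
  have gp : g p = 2 by rewrite /g (gS2 hS pS).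
  rewrite bsig /b gp.
  have spS := gSsig hS pS pS.
  have hz' : Fl NN (dot (zeta S xi) p.2 - 2 * dot (zeta S xi) p.2) (a (sig p p)).
    by rewrite -gp -hsigz; apply: hzeta.
  have hy' : Fl NN (dot (Ypt x) p.2 - 2 * dot (Ypt x) p.2) (c (sig p p)).
    by rewrite -gp -hsigy; apply: fl_point.
  have [j1 j2 j3] := at_k N0 (hzeta p pS) hz' (fl_point xW pS) hy' side.
  apply: (perq_strict (j0 := k)) => //.
  by move=> j; rewrite -gp; apply: notrip.
have total : \sum_(q <- S) (`|b q - a q| - 2 * ov (a q) (b q) (c q)) =
   \sum_(q <- S) (`|b q - a q| - ov (a q) (b q) (c q) - ov (a (sig p q)) (b (sig p q)) (c (sig p q))).
  rewrite sumrB [RHS]sumrB sumrB -ovsum -mulr_sumr; ring.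
have pos1 : 1 <= \sum_(q <- S) (`|b q - a q| - ov (a q) (b q) (c q) - ov (a (sig p q)) (b (sig p q)) (c (sig p q))).
  rewrite (bigD1_seq p) //= ?(gSuniq hS) //; set T := \sum_(i <- S | i != p) _.
  have : 0 <= T.
    rewrite /T big_seq_cond; apply: sumr_ge0 => q /andP [qS _].
    have := perq_q q qS; lia.
  move: perq_p; lia.
have : (2 * len S xi rx)%:Z = (2 * len S xi x)%:Z +
   \sum_(q <- S) (`|b q - a q| - ov (a q) (b q) (c q) - ov (a (sig p q)) (b (sig p q)) (c (sig p q))).
  rewrite h2r key split_id -total h2x; congr (_ + _).
  by apply: eq_bigr => q _; rewrite /c /a AE.
move: pos1; set T := \sum_(q <- S) _; lia.
Qed.
End Crit.

Section Anti.
Variable n : nat.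
Variables (S : seq (rootpair n)) (xi : lat n).
Hypothesis hS : good S xi.

Lemma inv_sref_mul p w : p \in S -> inW S w -> invmx (sref p *m w) = invmx w *m sref p.
Proof.
move=> pS [s [sS ->]].
have sS' : {subset (p :: s) <= S} by move=> z; rewrite inE => /orP [/eqP -> | /sS].
have -> : sref p *m prod_refl s = prod_refl (p :: s) by [].
by rewrite !(invW hS) // rev_cons -cats1 prod_refl_cat /= mulmx1.
Qed.

Lemma fv_r (x : tW n) p k q : inW S x.2 -> p \in S ->
  fv xi (mulW (aref p k) x) q = k * dot p.1 q.2 + fv xi x (sig p q).
Proof.
move=> xW pS; rewrite /fv /mulW /aref /= dotDl dotZl dot_mull sref_tr.
by rewrite inv_sref_mul // -mulmxA; ring.
Qed.

Lemma fv_nu (x : tW n) q : inW S x.2 -> q \in S -> fv xi x (nu q) = -1 - fv xi x q.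
Proof.
case=> s [sS xs] qS; rewrite /fv /nu /= dotNr mulmxN ef_neg; first by ring.
by have := gSreg hS (actW hS sS qS); rewrite xs.
Qed.

Lemma rr (x : tW n) p k : p \in S -> mulW (aref p k) (mulW (aref p k) x) = x.
Proof.
move=> pS; rewrite /mulW /aref /=; case: x => l w /=.
rewrite mulmxA sref_invol ?(gS2 hS) // mul1mx mulmxDr mulmxA sref_invol ?(gS2 hS) // mul1mx.
rewrite -scalemxAr sref_mul (gS2 hS) //; congr (_, _).
apply/matrixP => i j; rewrite !mxE; ring.
Qed.

Lemma inW_sref p w : p \in S -> inW S w -> inW S (sref p *m w).
Proof.
move=> pS [s [sS ->]]; exists (p :: s); split => //.
by move=> z; rewrite inE => /orP [/eqP -> | /sS].
Qed.

Lemma anti (x : tW n) p k : inW S x.2 -> p \in S ->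
  (k <= fv xi x p) != (k <= fv xi (0, 1%:M) p) ->
  (len S xi (mulW (aref p k) x) < len S xi x)%N.
Proof.
move=> xW pS hne.
set y := mulW (aref p k) x.
have yW : inW S y.2 by apply: inW_sref.
have := crit hS (p := p) (k := k) yW pS.
rewrite /y rr //; apply.
rewrite fv_r // -(nu_sig hS) // fv_nu // (gS2 hS pS).
move: hne; case: (k <= fv xi (0, 1%:M) p); case: (boolP (k <= fv xi x p)) => h //= _; lia.
Qed.
End Anti.

Section Main.
Variable n : nat.
Variables (R : seq (rootpair n)) (xi mu : lat n) (wM : 'M[int]_n).
Hypotheses (hR : is_root_datum R) (hreg : regular R xi) (hWM : WM R xi mu wM).

Let gR : good R xi := good_R hR hreg.
Let L := levi_roots R mu.

Lemma subLR : {subset L <= R}.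
Proof. by move=> z; rewrite mem_filter => /andP []. Qed.

Lemma gL : good L xi.
Proof.
split.
- by rewrite filter_uniq // (gSuniq gR).
- by move=> p /subLR; apply: (gS2 gR).
- move=> p q; rewrite !mem_filter => /andP [/eqP hp pR] /andP [/eqP hq qR].
  rewrite (gSsig gR) // andbT sigE /= dotBl dotZl hp hq mulr0 subr0 //.
- by move=> p /subLR; apply: (gSreg gR).
Qed.

Lemma wM_inW : inW R wM. Proof. by case: hWM. Qed.

Lemma wM_unit : wM \in unitmx.
Proof. by case: wM_inW => s [sS ->]; apply: (unitW gR). Qed.

Lemma step_simple p : simple_root L xi p -> pos xi (invmx wM *m p.1).
Proof.
move=> sp; have [pL pp _] := sp; have pR := subLR pL.
case: hWM => wW hlen; have := hlen p sp.
apply: contraLR => hneg; rewrite -leqNgt ltnW //.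
have -> : lenW R xi (sref p *m wM) = len R xi (mulW (aref p 0) (0, wM)).
  by rewrite /lenW /mulW /aref /= scale0r add0r mulmx0.
apply: (anti gR) => //.
by rewrite /fv /ef /= dot0l !add0r invmx1 mul1mx pp (negbTE hneg).
Qed.

Lemma height_pos (g : lat n) : pos xi g -> (0 < absz (dot g xi))%N.
Proof. by rewrite /pos => h; rewrite absz_gt0 gt_eqF. Qed.

Lemma step_pos g : g \in L -> pos xi g.1 -> pos xi (invmx wM *m g.1).
Proof.
move=> gL' gp.
move: {2}(absz (dot g.1 xi)) (leqnn (absz (dot g.1 xi))) => m hm.
elim: m g gL' gp hm => [|m IH] g gL' gp hm.
  by move: (height_pos gp); rewrite leqn0 in hm; rewrite (eqP hm).
have [sg | nsg] := (classic (simple_root L xi g)); first exact: step_simple.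
have : exists q r, [/\ q \in L, r \in L, pos xi q.1, pos xi r.1 & g.1 = q.1 + r.1].
  apply: NNPP => hne; apply: nsg; split => //.
move=> [q [r [qL rL qp rp ge]]].
have hq : (absz (dot q.1 xi) <= m)%N.
  move: hm gp qp rp; rewrite ge /pos dotDl => hm gp qp rp; lia.
have hr : (absz (dot r.1 xi) <= m)%N.
  move: hm gp qp rp; rewrite ge /pos dotDl => hm gp qp rp; lia.
have := IH q qL qp hq; have := IH r rL rp hr.
by rewrite ge mulmxDr /pos dotDl; lia.
Qed.

Lemma pos_invW_root g : g \in L -> dot (invmx wM *m g.1) xi != 0.
Proof.
move=> gL'; case: wM_inW => s [sS ws]; rewrite ws.
by have := gSreg gR (actW gR sS (subLR gL')).
Qed.

Lemma step_all g : g \in L -> pos xi (invmx wM *m g.1) = pos xi g.1.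
Proof.
move=> gL'; case: (boolP (pos xi g.1)) => gp; first exact: step_pos.
have nL : nu g \in L by apply: (nuS gL).
have := step_pos nL; rewrite /nu /= pos_neg ?(gSreg gL) // gp mulmxN pos_neg; last first.
  exact: pos_invW_root.
by move=> /(_ isT) /negbTE.
Qed.

Lemma ef_step g : g \in L -> ef xi (invmx wM *m g.1) = ef xi g.1.
Proof. by move=> gL'; rewrite /ef step_all. Qed.

Lemma conjWE (x : tW n) : conjW wM x = (invmx wM *m x.1, invmx wM *m x.2 *m wM).
Proof. by rewrite /conjW /mulW /= add0r mulmx0 addr0. Qed.

Definition pr (p : rootpair n) : rootpair n := (invmx wM *m p.1, wM^T *m p.2).

Lemma prR p : p \in L -> pr p \in R.
Proof.
move=> pL; case: wM_inW => s [sS ws]; rewrite /pr ws.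
exact: (actW gR sS (subLR pL)).
Qed.

Lemma inW_LR w : inW L w -> inW R w.
Proof. by case=> s [sS ->]; exists s; split => // z /sS /subLR. Qed.

Lemma inW_mul w1 w2 : inW R w1 -> inW R w2 -> inW R (w1 *m w2).
Proof.
move=> [s1 [s1S ->]] [s2 [s2S ->]]; exists (s1 ++ s2); split; last by rewrite prod_refl_cat.
by move=> z; rewrite mem_cat => /orP [/s1S | /s2S].
Qed.

Lemma inW_inv : inW R (invmx wM).
Proof.
case: wM_inW => s [sS ->]; rewrite (invW gR) //; exists (rev s); split => //.
by move=> z; rewrite mem_rev => /sS.
Qed.

Lemma conj_inW (x : tW n) : inW L x.2 -> inW R (conjW wM x).2.
Proof.
move=> xW; rewrite conjWE /=; apply: inW_mul; last exact: wM_inW.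
by apply: inW_mul; [exact: inW_inv | exact: inW_LR].
Qed.

Lemma fv_conj (x : tW n) p : inW L x.2 -> p \in L ->
  fv xi (conjW wM x) (pr p) = fv xi x p.
Proof.
move=> xW pL; rewrite conjWE /fv /pr /= dot_mull mulmxA -trmx_mul (mulmxV wM_unit) trmx1 mul1mx.
have ux : x.2 \in unitmx by case: (inW_LR xW) => s [sS ->]; apply: (unitW gR).
have -> : invmx (invmx wM *m x.2 *m wM) = invmx wM *m invmx x.2 *m wM.
  apply: invmx_eq; rewrite -!mulmxA [wM *m (invmx wM *m _)]mulmxA (mulmxV wM_unit) mul1mx.
  by rewrite [x.2 *m (invmx x.2 *m _)]mulmxA (mulmxV ux) mul1mx (mulVmx wM_unit).
rewrite -!mulmxA [wM *m (invmx wM *m _)]mulmxA (mulmxV wM_unit) mul1mx.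
case: xW => s [sS xs]; rewrite xs.
have := ef_step (actW gL sS pL); rewrite /= => ->; done.
Qed.

Lemma fv1_conj p : p \in L -> fv xi (0, 1%:M) (pr p) = fv xi (0, 1%:M) p.
Proof. by move=> pL; rewrite /fv /pr /= !dot0l invmx1 !mul1mx ef_step. Qed.

Lemma conj_step (x : tW n) p k : p \in L -> inW L x.2 ->
  conjW wM (mulW (aref p k) x) = mulW (aref (pr p) k) (conjW wM x).
Proof.
move=> pL xW; rewrite !conjWE /mulW /aref /pr /=.
have hs : sref (invmx wM *m p.1, wM^T *m p.2) *m invmx wM = invmx wM *m sref p.
  rewrite /sref /= mulmxBl mul1mx mulmxBr mulmx1 trmx_mul trmxK -!mulmxA (mulmxV wM_unit) mulmx1.
  done.
congr (_, _).
- by rewrite mulmxDr -scalemxAr mulmxA [sref _ *m (_ *m _)]mulmxA hs.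
- by rewrite !mulmxA hs.
Qed.

Lemma rt_inW (x y : tW n) : clos_refl_trans (tW n) (bstep L xi) x y -> inW L y.2 -> inW L x.2.
Proof.
elim=> {x y} [x y [p [k [pL -> _]]] | x | x y z _ IH1 _ IH2] //=.
- move=> h; have := inW_sref (p := p) pL h.
  by rewrite mulmxA sref_invol ?(gS2 gL) // mul1mx.
- by move=> /IH2 /IH1.
Qed.

Lemma main_chain (x y : tW n) : clos_refl_trans (tW n) (bstep L xi) x y -> inW L y.2 ->
  bruhat_le R xi (conjW wM x) (conjW wM y).
Proof.
elim=> {x y} [x y hst | x | x y z hxy IH1 hyz IH2] hy.
- case: hst => p [k [pL ey hlen]].
  have hxy : clos_refl_trans (tW n) (bstep L xi) x y.
    by apply: rt_step; exists p, k; split.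
  have xW : inW L x.2 := rt_inW hxy hy.
  apply: rt_step; exists (pr p), k; split.
  + exact: prR.
  + by rewrite ey conj_step.
  + rewrite ey conj_step //.
    apply: (@crit n R xi gR (conjW wM x) (pr p) k); first exact: conj_inW.
      exact: prR.
    rewrite fv_conj // fv1_conj //.
    apply/eqP/negP => hne; move: hlen; rewrite ey; apply/negP; rewrite -leqNgt ltnW //.
    by apply: (@anti n L xi gL x p k xW pL); apply/negP.
- exact: rt_refl.
- have yW : inW L y.2 by apply: (rt_inW hyz).
  exact: rt_trans (IH1 yW) (IH2 hy).
Qed.
End Main.

Theorem mainTheorem14 (n : nat) (R : seq (rootpair n)) (xi mu lam : lat n)
  (wM : 'M[int]_n) :
  is_root_datum R -> reduced R -> regular R xi ->
  WM R xi mu wM ->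
  forall x : tW n, Adm (levi_roots R mu) xi lam x -> Adm R xi lam (conjW wM x).
Proof.
move=> hR _ hreg hWM x [v [vW hle]].
have h1 : inW (levi_roots R mu) (transl (v *m lam)).2 by exists [::].
have := main_chain hR hreg hWM hle h1.
rewrite (conjWE wM (transl (v *m lam))) /= mulmx1 (mulVmx (wM_unit hR hreg hWM)) => hb.
exists (invmx wM *m v); split.
- apply: inW_mul; first exact: (inW_inv hR hreg hWM).
  exact: (inW_LR vW).
- by rewrite /transl -mulmxA.
Qed.
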